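(* Let $F_1,F_2\colon\mathbf{A}\to\mathbf{B}$ be lenses, and let $E\colon\mathbf{B}\to\mathbf{C}$ be a lens with $E\circ F_1=E\circ F_2$ such that the get functor $UE$ is a coequaliser of $UF_1$ and $UF_2$ in $\mathbf{Cat}$. Let $G\colon\mathbf{B}\to\mathbf{D}$ be a lens with $G\circ F_1=G\circ F_2$, and let $H\colon\mathbf{C}\to\mathbf{D}$ be the unique functor with $UG=H\circ UE$. Then there is a unique lens structure on $H$ such that $\varphi_{H,EB}(d)=E\,\varphi_{G,B}(d)$ for all objects $B$ of $\mathbf{B}$ and all morphisms $d$ of $\mathbf{D}$ with domain $GB$.
   Context: A lens $F\colon \mathbf{A}\to\mathbf{B}$ between small categories consists of a functor $F\colon\mathbf{A}\to\mathbf{B}$ (the get functor) together with, for each object $A$ of $\mathbf{A}$, a function $\varphi_{F,A}$ from the set of morphisms of $\mathbf{B}$ with domain $FA$ to the set of morphisms of $\mathbf{A}$ with domain $A$, such that: $F(\varphi_{F,A}b)=b$; $\varphi_{F,A}(\mathrm{id}_{FA})=\mathrm{id}_A$; and $\varphi_{F,A}(b'\circ b)=\varphi_{F,A'}(b')\circ\varphi_{F,A}(b)$ whenever $b$ has domain $FA$, $A'$ is the codomain of $\varphi_{F,A}b$, and $b'$ has domain $FA'$. A lens structure on a functor is a choice of such put functions. $\mathbf{Lens}$ is the category of small categories and lenses, with composite of $F\colon\mathbf{A}\to\mathbf{B}$, $G\colon\mathbf{B}\to\mathbf{C}$ having get functor $G\circ F$ and puts $\varphi_{G\circ F,A}(c)=\varphi_{F,A}(\varphi_{G,FA}(c))$.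 $U\colon\mathbf{Lens}\to\mathbf{Cat}$ sends a lens to its get functor. *)

(* Defs.v *)
Set Implicit Arguments.

Record Category := {
  Ob : Type;
  Mor : Type;
  dom : Mor -> Ob;
  cod : Mor -> Ob;
  idm : Ob -> Mor;
  comp : Mor -> Mor -> Mor;  (* comp g f = g o f, meaningful when cod f = dom g *)
  dom_id : forall a, dom (idm a) = a;
  cod_id : forall a, cod (idm a) = a;
  dom_comp : forall f g, cod f = dom g -> dom (comp g f) = dom f;
  cod_comp : forall f g, cod f = dom g -> cod (comp g f) = cod g;
  comp_id_l : forall f, comp (idm (cod f)) f = f;
  comp_id_r : forall f, comp f (idm (dom f)) = f;
  comp_assoc : forall f g h, cod f = dom g -> cod g = dom h ->
      comp h (comp g f) = comp (comp h g) f
}.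

Arguments dom {c} _.
Arguments cod {c} _.
Arguments idm {c} _.
Arguments comp {c} _ _.

Record Functor (A B : Category) := {
  fo : Ob A -> Ob B;
  fm : Mor A -> Mor B;
  f_dom : forall f, dom (fm f) = fo (dom f);
  f_cod : forall f, cod (fm f) = fo (cod f);
  f_id : forall a, fm (idm a) = idm (fo a);
  f_comp : forall f g, cod f = dom g -> fm (comp g f) = comp (fm g) (fm f)
}.

Arguments fo {A B} _ _.
Arguments fm {A B} _ _.

Definition functor_eq {A B} (F G : Functor A B) : Prop :=
  (forall a, fo F a = fo G a) /\ (forall f, fm F f = fm G f).

Definition fcomp_fo {A B C} (G : Functor B C) (F : Functor A B) := fun a => fo G (fo F a).
Definition fcomp_fm {A B C} (G : Functor B C) (F : Functor A B) := fun f => fm G (fm F f).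

Lemma fcomp_dom {A B C} (G : Functor B C) (F : Functor A B) :
  forall f, dom (fcomp_fm G F f) = fcomp_fo G F (dom f).
Proof. intro f; unfold fcomp_fm, fcomp_fo; rewrite f_dom, f_dom; reflexivity. Qed.
Lemma fcomp_cod {A B C} (G : Functor B C) (F : Functor A B) :
  forall f, cod (fcomp_fm G F f) = fcomp_fo G F (cod f).
Proof. intro f; unfold fcomp_fm, fcomp_fo; rewrite f_cod, f_cod; reflexivity. Qed.
Lemma fcomp_id {A B C} (G : Functor B C) (F : Functor A B) :
  forall a, fcomp_fm G F (idm a) = idm (fcomp_fo G F a).
Proof. intro a; unfold fcomp_fm, fcomp_fo; rewrite f_id, f_id; reflexivity. Qed.
Lemma fcomp_comp {A B C} (G : Functor B C) (F : Functor A B) :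
  forall f g, cod f = dom g ->
    fcomp_fm G F (comp g f) = comp (fcomp_fm G F g) (fcomp_fm G F f).
Proof.
  intros f g H; unfold fcomp_fm; rewrite (f_comp F f g H), f_comp; [reflexivity|].
  rewrite f_cod, f_dom, H; reflexivity.
Qed.

Definition fcomp {A B C} (G : Functor B C) (F : Functor A B) : Functor A C :=
  {| fo := fcomp_fo G F; fm := fcomp_fm G F;
     f_dom := fcomp_dom G F; f_cod := fcomp_cod G F;
     f_id := fcomp_id G F; f_comp := fcomp_comp G F |}.

(* A lens structure (put functions) on a functor F : A -> B.
   phi a b is only specified for b with dom b = F a. *)
Definition is_lens_structure {A B} (F : Functor A B) (phi : Ob A -> Mor B -> Mor A) : Prop :=
  (forall a b, dom b = fo F a -> dom (phi a b) = a) /\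
  (forall a b, dom b = fo F a -> fm F (phi a b) = b) /\
  (forall a, phi a (idm (fo F a)) = idm a) /\
  (forall a b b', dom b = fo F a -> dom b' = fo F (cod (phi a b)) ->
      phi a (comp b' b) = comp (phi (cod (phi a b)) b') (phi a b)).

Record Lens (A B : Category) := {
  lget : Functor A B;
  lput : Ob A -> Mor B -> Mor A;
  lput_ax : is_lens_structure lget lput
}.

Arguments lget {A B} _.
Arguments lput {A B} _ _ _.

Definition lens_eq {A B} (L M : Lens A B) : Prop :=
  functor_eq (lget L) (lget M) /\
  (forall a b, dom b = fo (lget L) a -> lput L a b = lput M a b).

Definition lcomp_put {A B C} (G : Lens B C) (F : Lens A B) : Ob A -> Mor C -> Mor A :=
  fun a c => lput F a (lput G (fo (lget F) a) c).

Lemma lcomp_ax {A B C} (G : Lens B C) (F : Lens A B) :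
  is_lens_structure (fcomp (lget G) (lget F)) (lcomp_put G F).
Proof.
  destruct F as [F phi [P1 [P2 [P3 P4]]]]; destruct G as [G psi [Q1 [Q2 [Q3 Q4]]]].
  unfold lcomp_put, is_lens_structure; cbn [fcomp fo fm lget lput]; unfold fcomp_fo, fcomp_fm.
  split; [|split; [|split]].
  - intros a c Hc. apply P1. apply Q1. exact Hc.
  - intros a c Hc. rewrite (P2 a (psi (fo F a) c)) by (apply Q1; exact Hc). apply Q2. exact Hc.
  - intros a. rewrite Q3. apply P3.
  - intros a c c' Hc Hc'.
    assert (E1 : dom (psi (fo F a) c) = fo F a) by (apply Q1; exact Hc).
    assert (E2 : cod (psi (fo F a) c) = fo F (cod (phi a (psi (fo F a) c)))).
    { transitivity (cod (fm F (phi a (psi (fo F a) c)))).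
      - rewrite (P2 a _ E1). reflexivity.
      - apply f_cod. }
    rewrite Q4 by (exact Hc || (rewrite <- E2 in Hc'; exact Hc')).
    rewrite P4; [ | exact E1 | ].
    + rewrite <- E2. reflexivity.
    + rewrite Q1; [exact E2|]. rewrite <- E2 in Hc'. exact Hc'.
Qed.

Definition lcomp {A B C} (G : Lens B C) (F : Lens A B) : Lens A C :=
  {| lget := fcomp (lget G) (lget F); lput := lcomp_put G F; lput_ax := lcomp_ax G F |}.

Definition is_coequaliser {A B C} (F1 F2 : Functor A B) (E : Functor B C) : Prop :=
  functor_eq (fcomp E F1) (fcomp E F2) /\
  forall (X : Category) (K : Functor B X),
    functor_eq (fcomp K F1) (fcomp K F2) ->
    exists H : Functor C X, functor_eq (fcomp H E) K /\
      forall H' : Functor C X, functor_eq (fcomp H' E) K -> functor_eq H' H.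

(* Main.v *)
Require Import Defs.
From Stdlib Require Import PropExtensionality FunctionalExtensionality ClassicalEpsilon.

Definition Chaotic (T : Type) : Category.
Proof.
  refine {| Ob := T; Mor := T * T; dom := fst; cod := snd;
            idm := fun a => (a, a); comp := fun g f => (fst f, snd g) |};
  try (intros; reflexivity); intros [x y]; reflexivity.
Defined.

Definition ChFun {B : Category} (T : Type) (o : Ob B -> T) : Functor B (Chaotic T).
Proof.
  refine {| fo := (o : Ob B -> Ob (Chaotic T)); fm := fun f => (o (dom f), o (cod f)) : Mor (Chaotic T) |}.
  - intros; reflexivity.
  - intros; reflexivity.
  - intros a; simpl; rewrite dom_id, cod_id; reflexivity.
  - intros f g Hfg; simpl; rewrite dom_comp, cod_comp by exact Hfg; reflexivity.
Defined.

Lemma coeq_ker {A B C} (F1 F2 : Functor A B) (E : Functor B C) T (o : Ob B -> T) :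
  is_coequaliser F1 F2 E -> (forall a, o (fo F1 a) = o (fo F2 a)) ->
  forall b b', fo E b = fo E b' -> o b = o b'.
Proof.
  intros [_ U] Ho b b' Hb.
  destruct (U _ (ChFun T o)) as [HK [HK1 _]].
  - split; intro f; simpl; unfold fcomp_fo, fcomp_fm; simpl; rewrite ?f_dom, ?f_cod, ?Ho; reflexivity.
  - destruct HK1 as [HK1 _]. simpl in HK1. unfold fcomp_fo in HK1.
    rewrite <- (HK1 b), <- (HK1 b'), Hb. reflexivity.
Qed.

Lemma coeq_surj {A B C} (F1 F2 : Functor A B) (E : Functor B C) :
  is_coequaliser F1 F2 E -> forall c, exists b, fo E b = c.
Proof.
  intros [hE U] c.
  set (H1 := ChFun (B := C) Prop (fun _ => True)).
  set (H2 := ChFun (B := C) Prop (fun c => exists b, fo E b = c)).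
  destruct (U _ (fcomp H1 E)) as [HK [_ Uq]].
  - split; intro; reflexivity.
  - assert (Hx : forall b, (exists b', fo E b' = fo E b) = True).
    { intro b; apply propositional_extensionality; split; [trivial|intros _; exists b; reflexivity]. }
    assert (E1 : functor_eq H1 HK) by (apply Uq; split; intro; reflexivity).
    assert (E2 : functor_eq H2 HK).
    { apply Uq; split; intro f; simpl; unfold fcomp_fo, fcomp_fm; simpl.
      - apply Hx.
      - rewrite f_dom, f_cod, !Hx; reflexivity. }
    destruct E1 as [E1 _], E2 as [E2 _].
    assert (Hc : (exists b, fo E b = c) = True) by (exact (eq_trans (E2 c) (eq_sym (E1 c)))).
    rewrite Hc; exact I.
Qed.

Theorem lemma4p6 (A B C D : Category) (F1 F2 : Lens A B) (E : Lens B C)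
  (hEF : lens_eq (lcomp E F1) (lcomp E F2))
  (hcoeq : is_coequaliser (lget F1) (lget F2) (lget E))
  (G : Lens B D) (hGF : lens_eq (lcomp G F1) (lcomp G F2))
  (H : Functor C D) (hH : functor_eq (lget G) (fcomp H (lget E))) :
  exists phi : Ob C -> Mor D -> Mor C,
    (is_lens_structure H phi /\
     forall (b : Ob B) (d : Mor D), dom d = fo (lget G) b ->
       phi (fo (lget E) b) d = fm (lget E) (lput G b d)) /\
    forall psi : Ob C -> Mor D -> Mor C,
      is_lens_structure H psi ->
      (forall (b : Ob B) (d : Mor D), dom d = fo (lget G) b ->
         psi (fo (lget E) b) d = fm (lget E) (lput G b d)) ->
      forall (c : Ob C) (d : Mor D), dom d = fo H c -> psi c d = phi c d.
Proof.
  destruct (lput_ax G) as [G1 [G2 [G3 G4]]].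
  destruct (lput_ax F1) as [P1 [P2 _]].
  destruct (lput_ax F2) as [Q1 [Q2 _]].
  destruct hH as [hHo hHm]. simpl in hHo, hHm. unfold fcomp_fo in hHo. unfold fcomp_fm in hHm.
  set (eE := lget E) in *. set (gG := lget G) in *.
  assert (key : forall b b' d, fo eE b = fo eE b' -> dom d = fo gG b ->
            fm eE (lput G b d) = fm eE (lput G b' d)).
  { intros b b' d Hb Hd.
    pose (o := fun b (d : Mor D) (m : Mor C) => dom d = fo gG b /\ m = fm eE (lput G b d)).
    assert (Ho : o b = o b').
    { apply (coeq_ker (lget F1) (lget F2) eE (Mor D -> Mor C -> Prop) o hcoeq); [|exact Hb].
      intro a. destruct hGF as [[hGo _] hGp]. simpl in hGo, hGp. unfold fcomp_fo in hGo.
      unfold lcomp_put in hGp. fold gG in hGo, hGp.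
      apply functional_extensionality; intro d0; apply functional_extensionality; intro m.
      apply propositional_extensionality. unfold o.
      assert (Heq : dom d0 = fo gG (fo (lget F1) a) ->
                fm eE (lput G (fo (lget F1) a) d0) = fm eE (lput G (fo (lget F2) a) d0)).
      { intro Hd0.
        assert (Hd1 : dom (lput G (fo (lget F1) a) d0) = fo (lget F1) a) by (apply G1; exact Hd0).
        assert (Hd2 : dom (lput G (fo (lget F2) a) d0) = fo (lget F2) a)
          by (apply G1; rewrite <- hGo; exact Hd0).
        rewrite <- (P2 _ _ Hd1), <- (Q2 _ _ Hd2).
        rewrite (hGp a d0 Hd0).
        destruct hcoeq as [[_ hm] _]. apply hm. }
      rewrite <- (hGo a). split; intros [Hd0 Hm]; split; auto.
      - rewrite Hm; apply Heq; exact Hd0.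
      - rewrite Hm; symmetry; apply Heq; exact Hd0. }
    assert (Hob : o b d (fm eE (lput G b d))) by (split; [exact Hd|reflexivity]).
    rewrite Ho in Hob. destruct Hob as [_ Hm]. exact Hm. }
  assert (surj : forall c, {b | fo eE b = c}).
  { intro c. apply constructive_indefinite_description. exact (coeq_surj _ _ _ hcoeq c). }
  pose (s := fun c => proj1_sig (surj c)).
  assert (hs : forall c, fo eE (s c) = c) by (intro c; exact (proj2_sig (surj c))).
  assert (hGs : forall c, fo gG (s c) = fo H c) by (intro c; rewrite hHo, hs; reflexivity).
  exists (fun c d => fm eE (lput G (s c) d)).
  assert (spec : forall b d, dom d = fo gG b -> fm eE (lput G (s (fo eE b)) d) = fm eE (lput G b d)).
  { intros b d Hd. apply key; [rewrite hs; reflexivity|].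
    rewrite Hd, hGs, hHo. reflexivity. }
  split; [split|].
  - split; [|split; [|split]].
    + intros c d Hd. rewrite f_dom, G1 by (rewrite hGs; exact Hd). apply hs.
    + intros c d Hd. rewrite <- hHm. apply G2. rewrite hGs; exact Hd.
    + intros c. rewrite <- hGs, G3, f_id, hs. reflexivity.
    + intros c d d' Hd Hd'.
      assert (Hd0 : dom d = fo gG (s c)) by (rewrite hGs; exact Hd).
      set (p := lput G (s c) d) in *.
      assert (Hd1 : dom d' = fo gG (cod p)) by (rewrite Hd', f_cod, hHo; reflexivity).
      rewrite (G4 _ _ _ Hd0 Hd1). fold p.
      rewrite f_comp.
      * f_equal. rewrite f_cod. symmetry. apply spec. exact Hd1.
      * rewrite (G1 _ _ Hd1). reflexivity.
  - exact spec.
  - intros psi _ Hpsi c d Hd. rewrite <- (hs c) at 1. apply Hpsi. rewrite hGs; exact Hd.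
Qed.
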